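(* Let $G$ be a graph with $n$ vertices and $m$ edges, and let $k$ be an integer. Then $G$ has an $\alpha$-labeling with critical number $k$ if and only if $n\leqslant m+1$, $G$ is bipartite, and there is a bipartition of $\widehat{G}$ and an arrangement of the vertices of $\widehat{G}$ such that the corresponding biadjacency matrix $A$ is graceful and $A$ has $k+1$ rows. Likewise, $G$ has a complete $\alpha$-labeling with critical number $k$ if and only if $n=m+1$, $G$ is bipartite, and there is a bipartition of $\widehat{G}$ and an arrangement of its vertices such that the corresponding biadjacency matrix $A$ is completely graceful and has $k+1$ rows.
   Context: Graphs are finite, simple and undirected. For a graph $G=(V,E)$ with $m$ edges, a $\beta$-labeling (graceful labeling) is an injective $f:V\to\{0,\ldots,m\}$ such that the edge labels $|f(u)-f(v)|$, $uv\in E$, are distinct. An $\alpha$-labeling with critical number $k\in\{0,\ldots,m\}$ is a $\beta$-labeling $f$ such that for every edge $uv$ either $f(u)\le k<f(v)$ or $f(v)\le k<f(u)$; it is complete if $f$ is bijective. If $G$ has $n\le m+1$ vertices, $\widehat{G}$ is $G$ with $m+1-n$ isolated vertices added. For a bipartite graph with parts $X,Y$ (with the vertices of each part ordered), the biadjacency matrix is the $|X|\times|Y|$ $0$-$1$ matrix whose $(x,y)$ entry is $1$ iff $xy$ is an edge. For a $p\times q$ matrix the box-value of position $(i,j)$ is $p+j-i$; for $c=1,\ldots,p+q-1$ the positions with box-value $c$ form a diagonal. A $0$-$1$ matrix is graceful if every diagonal contains at most one $1$, and completely graceful if every diagonal contains exactly one $1$. *)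

(* Defs.v *)
From mathcomp Require Import all_boot all_order all_algebra.
Set Implicit Arguments. Unset Strict Implicit. Unset Printing Implicit Defensive.

Section Graphs.
Variables (T : finType) (e : rel T).

(* A finite simple graph is a symmetric irreflexive relation e on T. *)

Definition edges : {set {set T}} :=
  [set [set xy.1; xy.2] | xy in [set xy : T * T | e xy.1 xy.2]].

Definition nedges : nat := #|edges|.

Definition absdiff (a b : nat) : nat := `|(a%:Z - b%:Z)%R|%N.

Definition beta_labeling (f : T -> nat) : Prop :=
  injective f /\ (forall v, f v <= nedges) /\
  (forall x y x' y', e x y -> e x' y' ->
     absdiff (f x) (f y) = absdiff (f x') (f y') -> [set x; y] = [set x'; y']).

Definition alpha_labeling (k : nat) (f : T -> nat) : Prop :=
  beta_labeling f /\ k <= nedges /\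
  (forall u v, e u v -> (f u <= k < f v) \/ (f v <= k < f u)).

Definition complete_alpha_labeling (k : nat) (f : T -> nat) : Prop :=
  alpha_labeling k f /\ (forall i, i <= nedges -> exists v, f v = i).

Definition bipartite : Prop :=
  exists X : {set T}, forall x y, e x y -> (x \in X) != (y \in X).

Definition ghatV : finType := (T + 'I_(nedges.+1 - #|T|))%type.

Definition ghat_e (x y : ghatV) : bool :=
  match x, y with inl a, inl b => e a b | _, _ => false end.

(* A (bipartition + arrangement) of Ghat with p rows and q columns:
   rows r : 'I_p -> vertices (ordered part X), columns c : 'I_q -> vertices
   (ordered part Y); together they enumerate each vertex of Ghat exactly once,
   and every edge joins X and Y. *)
Definition arrangement (p q : nat) (r : 'I_p -> ghatV) (c : 'I_q -> ghatV) : Prop :=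
  injective r /\ injective c /\ (forall i j, r i <> c j) /\
  (forall v, (exists i, r i = v) \/ (exists j, c j = v)) /\
  (forall x y, ghat_e x y ->
     ((exists i, r i = x) /\ (exists j, c j = y)) \/
     ((exists i, r i = y) /\ (exists j, c j = x))).

Definition biadjacency (p q : nat) (r : 'I_p -> ghatV) (c : 'I_q -> ghatV)
  : 'M[nat]_(p, q) := \matrix_(i, j) (nat_of_bool (ghat_e (r i) (c j))).

End Graphs.

(* box value of position (i,j) (0-based indices; same value as 1-based) *)
Definition box_value (p q : nat) (i : 'I_p) (j : 'I_q) : nat := p + j - i.

Definition diag_ones (p q : nat) (A : 'M[nat]_(p, q)) (c : nat) : nat :=
  #|[set ij : 'I_p * 'I_q | (box_value ij.1 ij.2 == c) && (A ij.1 ij.2 == 1)]|.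

Definition zero_one (p q : nat) (A : 'M[nat]_(p, q)) : Prop :=
  forall i j, A i j = 0 \/ A i j = 1.

Definition graceful_mx (p q : nat) (A : 'M[nat]_(p, q)) : Prop :=
  zero_one A /\ forall c, 1 <= c <= p + q - 1 -> diag_ones A c <= 1.

Definition completely_graceful_mx (p q : nat) (A : 'M[nat]_(p, q)) : Prop :=
  zero_one A /\ forall c, 1 <= c <= p + q - 1 -> diag_ones A c = 1.

(* Main.v *)
Require Import Defs.
From mathcomp Require Import all_boot all_order all_algebra.
From mathcomp Require Import zify.
Set Implicit Arguments. Unset Strict Implicit. Unset Printing Implicit Defensive.

Lemma absdiffE a b : a <= b -> absdiff a b = b - a.
Proof. by move=> h; rewrite /absdiff distnEr. Qed.

Lemma absdiffC a b : absdiff a b = absdiff b a.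
Proof. by rewrite /absdiff distnC. Qed.

Section Main.
Variables (T : finType) (e : rel T).
Hypotheses (e_sym : symmetric e) (e_irr : irreflexive e).

Lemma card_ghat : #|T| <= (nedges e).+1 -> #|ghatV e| = (nedges e).+1.
Proof. by move=> h; rewrite card_sum card_ord; lia. Qed.

Lemma conv k q (r : 'I_k.+1 -> ghatV e) (c : 'I_q -> ghatV e) :
  #|T| <= (nedges e).+1 -> arrangement r c -> graceful_mx (biadjacency r c) ->
  exists f, alpha_labeling e k f /\
    (#|T| = (nedges e).+1 -> forall i, i <= nedges e -> exists v, f v = i).
Proof.
move=> hT [ri [ci [rc [cov ed]]]] [_ gr].
set h := fun s : 'I_k.+1 + 'I_q => match s with inl i => r i | inr j => c j end.
have hinj : injective h.
  case=> [i|j] [i'|j'] /= H.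
  - by rewrite (ri _ _ H).
  - by case: (rc _ _ H).
  - by case: (rc _ _ (esym H)).
  - by rewrite (ci _ _ H).
have pq : k.+1 + q = (nedges e).+1.
  have himg : h @: setT = setT.
    apply/setP => v; rewrite in_setT; apply/imsetP; case: (cov v) => [[i <-]|[j <-]].
    - by exists (inl i).
    - by exists (inr j).
  rewrite -(card_ghat hT) -cardsT -himg (card_imset _ hinj) cardsT card_sum !card_ord //.
pose f (v : T) := if [pick i | r i == inl v] is Some i then val i
  else if [pick j | c j == inl v] is Some j then k.+1 + j else 0.
have fr : forall i v, r i = inl v -> f v = i.
  move=> i v H; rewrite /f; case: pickP => [i' /eqP H'|H'].
  - by rewrite (ri i' i) // H H'.
  - by move: (H' i); rewrite H eqxx.
have fc : forall j v, c j = inl v -> f v = k.+1 + j.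
  move=> j v H; rewrite /f; case: pickP => [i' /eqP H'|H'].
  - by case: (rc i' j); rewrite H H'.
  case: pickP => [j' /eqP H''|H''].
  - by rewrite (ci j' j) // H H''.
  - by move: (H'' j); rewrite H eqxx.
have edge : forall x y, e x y -> exists i j,
    (r i = inl x /\ c j = inl y) \/ (r i = inl y /\ c j = inl x).
  move=> x y exy; have : ghat_e (inl x : ghatV e) (inl y) by exact: exy.
  case/ed => [[[i Hi] [j Hj]]|[[i Hi] [j Hj]]]; exists i, j; by [left; split|right; split].
have lab : forall x y i j, (r i = inl x /\ c j = inl y) \/ (r i = inl y /\ c j = inl x) ->
    absdiff (f x) (f y) = k.+1 + j - i.
  move=> x y i j [[H1 H2]|[H1 H2]]; rewrite (fr _ _ H1) (fc _ _ H2).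
  - by rewrite absdiffE //; have := ltn_ord i; lia.
  - by rewrite absdiffC absdiffE //; have := ltn_ord i; lia.
have ent : forall x y i j, (r i = inl x /\ c j = inl y) \/ (r i = inl y /\ c j = inl x) ->
    e x y -> biadjacency r c i j = 1.
  move=> x y i j [[H1 H2]|[H1 H2]] exy; rewrite mxE H1 H2 /= ?exy //.
  by rewrite e_sym exy.
exists f; split; last first.
  move=> hTe i hi; case: (ltnP i k.+1) => hik.
  - case E: (r (Ordinal hik)) => [v|t].
    + by exists v; rewrite (fr _ _ E).
    + by have := ltn_ord t; lia.
  - have hj : i - k.+1 < q by lia.
    case E: (c (Ordinal hj)) => [v|t].
    + by exists v; rewrite (fc _ _ E) /=; lia.
    + by have := ltn_ord t; lia.
have rowcol : forall v, (exists i, r i = inl v /\ f v = i) \/ (exists j, c j = inl v /\ f v = k.+1 + j).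
  move=> v; case: (cov (inl v)) => [[i Hi]|[j Hj]].
  - by left; exists i; rewrite (fr _ _ Hi).
  - by right; exists j; rewrite (fc _ _ Hj).
split; last split.
- split; last split.
  + move=> u v Huv.
    case: (rowcol u) => [[i [Hi Fi]]|[j [Hj Fj]]];
    case: (rowcol v) => [[i' [Hi' Fi']]|[j' [Hj' Fj']]].
    * have ii : i = i' by apply: val_inj; rewrite /= -Fi -Fi'.
      by move: Hi'; rewrite -ii Hi => -[].
    * by have := ltn_ord i; lia.
    * by have := ltn_ord i'; lia.
    * have jj : j = j' by apply: val_inj; rewrite /=; lia.
      by move: Hj'; rewrite -jj Hj => -[].
  + move=> v; case: (rowcol v) => [[i [_ ->]]|[j [_ ->]]].
    * by have := ltn_ord i; lia.
    * by have := ltn_ord j; lia.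
  + move=> x y x' y' exy exy' Hl.
    have [i [j Hij]] := edge _ _ exy; have [i' [j' Hij']] := edge _ _ exy'.
    have E1 := ent _ _ _ _ Hij exy; have E2 := ent _ _ _ _ Hij' exy'.
    move: Hl; rewrite (lab _ _ _ _ Hij) (lab _ _ _ _ Hij') => Hl.
    have cc1 : 1 <= k.+1 + j - i <= k.+1 + q - 1.
      by have := ltn_ord i; have := ltn_ord j; lia.
    have := gr _ cc1; move/card_le1_eqP => /(_ (i, j) (i', j')).
    rewrite !inE /= E1 E2 /box_value Hl eqxx /= => /(_ isT isT) [ei ej].
    subst i' j'.
    case: Hij => [[H1 H2]|[H1 H2]]; case: Hij' => [[H1' H2']|[H1' H2']];
      move: H1'; rewrite H1 => -[<-]; move: H2'; rewrite H2 => -[<-] //.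
    * by rewrite setUC.
    * by rewrite setUC.
- by lia.
- move=> u v euv; have [i [j [[H1 H2]|[H1 H2]]]] := edge _ _ euv;
    rewrite (fr _ _ H1) (fc _ _ H2); have := ltn_ord i.
  + by left; apply/andP; split; lia.
  + by right; apply/andP; split; lia.
Qed.


Lemma set2_orient (f : T -> nat) a b a' b' : f a < f b -> f a' < f b' ->
  [set a; b] = [set a'; b'] -> a = a' /\ b = b'.
Proof.
move=> h1 h2 H.
have : a \in [set a'; b'] by rewrite -H set21.
have : b \in [set a'; b'] by rewrite -H set22.
rewrite !inE => /orP [/eqP Eb|/eqP Eb] /orP [/eqP Ea|/eqP Ea]; subst; first [by split | lia].
Qed.

Lemma fwd k f : alpha_labeling e k f ->
  #|T| <= (nedges e).+1 /\ bipartite e /\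
  exists q (r : 'I_k.+1 -> ghatV e) (c : 'I_q -> ghatV e),
    arrangement r c /\ graceful_mx (biadjacency r c) /\ k.+1 + q = (nedges e).+1 /\
    (forall a, f a <= k -> exists i : 'I_k.+1, r i = inl a /\ nat_of_ord i = f a) /\
    (forall b, k < f b -> exists j : 'I_q, c j = inl b /\ k.+1 + j = f b).
Proof.
move=> [[finj [fle fdist]] [km fcr]].
set m := nedges e.
pose g (v : T) : 'I_m.+1 := inord (f v).
have gval : forall v, nat_of_ord (g v) = f v by move=> v; rewrite /g inordK // ltnS fle.
have ginj : injective g by move=> u v /(congr1 (@nat_of_ord _)); rewrite !gval => /finj.
have hT : #|T| <= m.+1 by have := leq_card g ginj; rewrite card_ord.
split => //; split.
  exists [set v | f v <= k] => x y exy; rewrite !inE.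
  case: (fcr _ _ exy) => /andP [h1 h2]; rewrite ltnNge in h2.
  - by rewrite h1 (negbTE h2).
  - by rewrite h1 (negbTE h2).
pose U := ~: (g @: setT).
have cardU : #|U| = m.+1 - #|T|.
  by have := cardsC (g @: setT); rewrite card_imset // cardsT card_ord /U; lia.
pose psi (s : ghatV e) : 'I_m.+1 :=
  match s with inl v => g v | inr t => nth ord0 (enum U) t end.
have sizeU : size (enum U) = m.+1 - #|T| by rewrite -cardE cardU.
have psiinj : injective psi.
  case=> [v|t] [v'|t'] /=.
  - by move/ginj => ->.
  - move=> H; have : nth ord0 (enum U) t' \in U.
      by rewrite -mem_enum mem_nth // sizeU.
    by rewrite -H inE imset_f.
  - move=> H; have : nth ord0 (enum U) t \in U.
      by rewrite -mem_enum mem_nth // sizeU.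
    by rewrite H inE imset_f.
  - move/eqP; rewrite nth_uniq ?sizeU ?enum_uniq // => /eqP H.
    by congr inr; apply: val_inj.
have psisurj : forall l, exists v, psi v = l.
  have H : psi @: setT = setT.
    apply/eqP; rewrite eqEcard subsetT /= card_imset // cardsT card_sum card_ord.
    by rewrite cardsT card_ord; lia.
  move=> l; have : l \in psi @: setT by rewrite H.
  by case/imsetP => v _ ->; exists v.
have [phi phiK] := fin_all_exists psisurj.
have psiK : forall v, phi (psi v) = v by move=> v; apply: psiinj; rewrite phiK.
have phiinj : injective phi by move=> l l' /(congr1 psi); rewrite !phiK.
pose r (i : 'I_k.+1) := phi (inord i).
pose c (j : 'I_(m - k)) := phi (inord (k.+1 + j)).
have psir : forall i, nat_of_ord (psi (r i)) = i.
  by move=> i; rewrite phiK inordK //; have := ltn_ord i; lia.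
have psic : forall j, nat_of_ord (psi (c j)) = k.+1 + j.
  by move=> j; rewrite phiK inordK //; have := ltn_ord j; lia.
have inrow : forall v, nat_of_ord (psi v) <= k -> exists i : 'I_k.+1, r i = v /\ nat_of_ord i = psi v.
  move=> v hv; have hv' : nat_of_ord (psi v) < k.+1 by [].
  exists (Ordinal hv'); split => //; rewrite /r /= inord_val psiK //.
have incol : forall v, k < nat_of_ord (psi v) -> exists j : 'I_(m - k), c j = v /\ k.+1 + j = psi v.
  move=> v hv; have hv' : nat_of_ord (psi v) - k.+1 < m - k by have := ltn_ord (psi v); lia.
  exists (Ordinal hv'); split => /=; last by lia.
  rewrite /c /= subnKC // inord_val psiK //.
have inrowT : forall a, f a <= k -> exists i : 'I_k.+1, r i = inl a /\ nat_of_ord i = f a.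
  move=> a ha; have [|i [H1 H2]] := inrow (inl a); first by rewrite /= gval.
  by exists i; split => //; rewrite H2 /= gval.
have incolT : forall b, k < f b -> exists j : 'I_(m - k), c j = inl b /\ k.+1 + j = f b.
  move=> b hb; have [|j [H1 H2]] := incol (inl b); first by rewrite /= gval.
  by exists j; split => //; rewrite H2 /= gval.
exists (m - k), r, c; split; last split; last split; last split.
- split; last split; last split; last split.
  + by move=> i i' /(congr1 (fun s => nat_of_ord (psi s))); rewrite !psir => /val_inj.
  + move=> j j' /(congr1 (fun s => nat_of_ord (psi s))); rewrite !psic => H.
    by apply: val_inj => /=; lia.
  + move=> i j /(congr1 (fun s => nat_of_ord (psi s))); rewrite psir psic.
    by have := ltn_ord i; lia.
  + move=> v; case: (leqP (psi v) k) => hv.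
    * by left; have [i [H _]] := inrow v hv; exists i.
    * by right; have [j [H _]] := incol v hv; exists j.
  + case=> [a|t] [b|t'] //= eab.
    case: (fcr _ _ eab) => /andP [h1 h2].
    * left; split.
      - by have [i [H _]] := inrowT a h1; exists i.
      - by have [j [H _]] := incolT b h2; exists j.
    * right; split.
      - by have [i [H _]] := inrowT b h1; exists i.
      - by have [j [H _]] := incolT a h2; exists j.
- split.
    by move=> i j; rewrite mxE; case: ghat_e; [right|left].
  move=> cc _; apply/card_le1_eqP => -[i j] [i' j']; rewrite !inE /= !mxE.
  have key : forall i j, nat_of_bool (ghat_e (r i) (c j)) == 1 ->
      exists a b, [/\ r i = inl a, c j = inl b, e a b, f a = i & f b = k.+1 + j].
    move=> i0 j0; case E1: (r i0) => [a|t] //; case E2: (c j0) => [b|t] //=.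
    case eab: (e a b) => // _; exists a, b; split => //.
    + by have := psir i0; rewrite E1 /= gval.
    + by have := psic j0; rewrite E2 /= gval.
  move=> /andP [/eqP b1 /key [a [b [E1 E2 eab fa fb]]]].
  move=> /andP [/eqP b2 /key [a' [b' [E1' E2' eab' fa' fb']]]].
  have Hl : absdiff (f a) (f b) = absdiff (f a') (f b').
    rewrite !absdiffE; last 2 first.
    * by rewrite fa' fb'; have := ltn_ord i'; lia.
    * by rewrite fa fb; have := ltn_ord i; lia.
    by move: b1 b2; rewrite /box_value fa fb fa' fb'; lia.
  have Hs := fdist _ _ _ _ eab eab' Hl.
  have o1 : f a < f b by rewrite fa fb; have := ltn_ord i; lia.
  have o2 : f a' < f b' by rewrite fa' fb'; have := ltn_ord i'; lia.
  have [ea eb] := set2_orient o1 o2 Hs; subst a' b'.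
  have ei : i' = i by apply: val_inj; rewrite /= -fa -fa'.
  have ej : j' = j by apply: val_inj => /=; lia.
  by rewrite ei ej.
- by have := km; lia.
- exact: inrowT.
- exact: incolT.
Qed.


Lemma fwdc k f : complete_alpha_labeling e k f ->
  #|T| = (nedges e).+1 /\ bipartite e /\
  exists q (r : 'I_k.+1 -> ghatV e) (c : 'I_q -> ghatV e),
    arrangement r c /\ completely_graceful_mx (biadjacency r c).
Proof.
move=> [Hf surj].
have [hT [bip [q [r [c [arr [[z gr] [pq [inrowT incolT]]]]]]]]] := fwd Hf.
move: Hf => [[finj [fle fdist]] [km fcr]].
set m := nedges e.
have hsurj : forall l : 'I_m.+1, exists v, f v = l.
  by move=> l; apply: surj; have := ltn_ord l; rewrite /m; lia.
have [h hK] := fin_all_exists hsurj.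
have hinj : injective h.
  by move=> l l' /(congr1 f); rewrite !hK => /val_inj.
have hT' : #|T| = m.+1.
  by apply/anti_leq; rewrite hT /=; have := leq_card h hinj; rewrite card_ord.
split => //; split => //; exists q, r, c; split => //; split => // cc hcc.
apply/eqP; rewrite eqn_leq gr //=.
pose P := [set xy : T * T | e xy.1 xy.2 && (f xy.1 < f xy.2)].
have edgesE : edges e = (fun xy : T * T => [set xy.1; xy.2]) @: P.
  apply/setP => E; apply/imsetP/imsetP => -[[x y] Hxy ->].
  - move: Hxy; rewrite inE /= => exy.
    have nxy : f x != f y.
      by apply/eqP => /finj exy'; move: exy; rewrite exy' e_irr.
    case: (ltngtP (f x) (f y)) nxy => // hxy _.
    + by exists (x, y) => //; rewrite inE /= exy hxy.
    + by exists (y, x); [rewrite inE /= e_sym exy hxy | rewrite /= setUC].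
  - move: Hxy; rewrite inE /= => /andP [exy _].
    by exists (x, y) => //; rewrite inE.
have cardP : #|P| = m.
  rewrite /m /nedges edgesE card_in_imset //.
  move=> [x y] [x' y']; rewrite !inE /= => /andP [_ h1] /andP [_ h2] H.
  by have [-> ->] := set2_orient h1 h2 H.
pose lab (xy : T * T) : 'I_m.+1 := inord (f xy.2 - f xy.1).
have labv : forall xy, nat_of_ord (lab xy) = f xy.2 - f xy.1.
  by move=> [x y]; rewrite /lab inordK //= ltnS; have := fle y; lia.
have labinj : {in P &, injective lab}.
  move=> [x y] [x' y']; rewrite !inE /= => /andP [exy h1] /andP [exy' h2].
  move=> /(congr1 (@nat_of_ord _)); rewrite !labv /= => H.
  have Hs : [set x; y] = [set x'; y'].
    by apply: fdist => //; rewrite !absdiffE //; lia.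
  by have [-> ->] := set2_orient h1 h2 Hs.
have labimg : lab @: P = [set~ ord0].
  apply/eqP; rewrite eqEcard; apply/andP; split.
  - apply/subsetP => l /imsetP [[x y] Hxy ->]; move: Hxy.
    rewrite !inE /= => /andP [_ hxy]; apply/eqP => /(congr1 (@nat_of_ord _)).
    by rewrite labv /=; lia.
  - by rewrite cardsC1 card_ord card_in_imset // cardP.
have hcc' : cc < m.+1 by move: hcc pq; lia.
have : (inord cc : 'I_m.+1) \in lab @: P.
  by rewrite labimg !inE; apply/eqP => /(congr1 (@nat_of_ord _)); rewrite inordK //=; lia.
case/imsetP => -[x y]; rewrite inE /= => /andP [exy hxy] Hl.
have Hl' : f y - f x = cc.
  by move: (congr1 (@nat_of_ord _) Hl); rewrite labv inordK.
have [/andP [h1 h2]|/andP [h1 h2]] := fcr _ _ exy; last by lia.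
have [i [Hi Fi]] := inrowT x h1; have [j [Hj Fj]] := incolT y h2.
apply/card_gt0P; exists (i, j); rewrite !inE /= mxE Hi Hj /= exy /box_value andbT.
by apply/eqP; lia.
Qed.

End Main.

Theorem theorem2p6 (T : finType) (e : rel T) (e_sym : symmetric e)
  (e_irr : irreflexive e) (k : nat) :
  ((exists f : T -> nat, alpha_labeling e k f) <->
     (#|T| <= (nedges e).+1 /\ bipartite e /\
      exists (p q : nat) (r : 'I_p -> ghatV e) (c : 'I_q -> ghatV e),
        arrangement r c /\ graceful_mx (biadjacency r c) /\ p = k.+1))
  /\
  ((exists f : T -> nat, complete_alpha_labeling e k f) <->
     (#|T| = (nedges e).+1 /\ bipartite e /\
      exists (p q : nat) (r : 'I_p -> ghatV e) (c : 'I_q -> ghatV e),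
        arrangement r c /\ completely_graceful_mx (biadjacency r c) /\ p = k.+1)).
Proof.
split; split.
- move=> [f Hf]; have [hT [bip [q [r [c [arr [gr _]]]]]]] := fwd Hf.
  by split => //; split => //; exists k.+1, q, r, c.
- move=> [hT [bip [p [q [r [c [arr [gr Ep]]]]]]]]; subst p.
  by have [f [Hf _]] := conv e_sym hT arr gr; exists f.
- move=> [f Hf]; have [hT [bip [q [r [c [arr gr]]]]]] := fwdc e_sym e_irr Hf.
  by split => //; split => //; exists k.+1, q, r, c.
- move=> [hT [bip [p [q [r [c [arr [[z gr] Ep]]]]]]]]; subst p.
  have hT' : #|T| <= (nedges e).+1 by rewrite hT.
  have gr' : graceful_mx (biadjacency r c) by split => // cc /gr ->.
  have [f [Hf Hs]] := conv e_sym hT' arr gr'.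
  by exists f; split => //; apply: Hs.
Qed.
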